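(* Let $p$ be a prime and $n\ge1$, and suppose $p^n-1=st$ with positive integers $s<t$ and $\gcd(s,t)=1$. Let $\alpha$ be a generator of $\mathbb{F}_{p^n}^\times$, $\beta=\alpha^t$, $\gamma=\alpha^s$. Let $S_1,S_2\subset\mathbb{Z}_s\times\mathbb{Z}_t$ be two disjoint linearly independent patterns, of sizes $m_1$ and $m_2$ respectively, and let $V_1,V_2\subset\mathbb{F}_{p^n}$ be the $\mathbb{F}_p$-spans of $A|_{S_1}$ and $A|_{S_2}$. Suppose $\dim_{\mathbb{F}_p}V_1+\dim_{\mathbb{F}_p}V_2\le n$. Then there exists $(a,b)\in\mathbb{Z}_s\times\mathbb{Z}_t$ such that $T_{a,b}(S_2)$ is disjoint from $S_1$ and the pattern $S_1\cup T_{a,b}(S_2)$ is linearly independent.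
   Context: $\mathbb{Z}_s=\mathbb{Z}/s\mathbb{Z}$, $\mathbb{Z}_t=\mathbb{Z}/t\mathbb{Z}$; $(i,j)\mapsto\beta^i\gamma^j$ is a well-defined bijection $\mathbb{Z}_s\times\mathbb{Z}_t\to\mathbb{F}_{p^n}^\times$. A pattern is a subset $S\subset\mathbb{Z}_s\times\mathbb{Z}_t$, and $A|_S=\{\beta^i\gamma^j:(i,j)\in S\}$. $S$ is a linearly independent pattern if the $|S|$ elements of $A|_S$ are linearly independent over $\mathbb{F}_p$. The toroidal translation $T_{a,b}:\mathbb{Z}_s\times\mathbb{Z}_t\to\mathbb{Z}_s\times\mathbb{Z}_t$ is $T_{a,b}(i,j)=(i+a \bmod s,\ j+b\bmod t)$. *)

(* Defs.v *)
From HB Require Import structures.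
From mathcomp Require Import all_boot all_order all_algebra all_field.
Set Implicit Arguments. Unset Strict Implicit. Unset Printing Implicit Defensive.
Import GRing.Theory.
Local Open Scope ring_scope.

Definition ordD (n : nat) (i : 'I_n) (a : nat) : 'I_n :=
  Ordinal (ltn_pmod (i + a) (leq_ltn_trans (leq0n i) (ltn_ord i))).

Definition torT (s t : nat) (a : 'I_s) (b : 'I_t) (x : 'I_s * 'I_t) : 'I_s * 'I_t :=
  (ordD x.1 a, ordD x.2 b).

Definition torTset (s t : nat) (a : 'I_s) (b : 'I_t) (S : {set 'I_s * 'I_t})
  : {set 'I_s * 'I_t} := [set torT a b x | x in S].

Definition Aseq (p : nat) (L : fieldExtType 'F_p) (s t : nat)
  (beta gamma : L) (S : {set 'I_s * 'I_t}) : seq L :=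
  [seq beta ^+ (nat_of_ord x.1) * gamma ^+ (nat_of_ord x.2) | x : 'I_s * 'I_t <- enum S].

Definition lin_indep_pattern (p : nat) (L : fieldExtType 'F_p) (s t : nat)
  (beta gamma : L) (S : {set 'I_s * 'I_t}) : bool :=
  free (Aseq beta gamma S).

Definition mult_generator (p : nat) (L : fieldExtType 'F_p) (alpha : L) : Prop :=
  alpha != 0 /\ forall x : L, x != 0 -> exists k : nat, x = alpha ^+ k.

(* Main.v *)
Require Import Defs.
From HB Require Import structures.
From mathcomp Require Import all_boot all_order all_algebra all_field.
From mathcomp Require Import zify ring.
Import GRing.Theory.
Local Open Scope ring_scope.
Section Fin.
Variables (p : nat) (L : fieldExtType 'F_p).
Let L' := finvect_type L.
Lemma cardL : prime p -> #|L'| = (p ^ \dim {:L})%N.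
Proof. move=> pp. rewrite -(@card_vspacef _ L' (Vector.class L')) card_vspace card_Fp //. Qed.
Lemma fermatL (x : L) : prime p -> x != 0 -> x ^+ (p ^ \dim {:L} - 1) = 1.
Proof.
move=> pp nz. have := @expf_card _ (x : L').
rewrite cardL // .
have : (0 < p ^ \dim {:L})%N by rewrite expn_gt0 prime_gt0.
case: (p ^ _)%N => // m _ H. rewrite subSS subn0.
apply: (mulfI nz). by rewrite mulr1 -exprS.
Qed.

Definition comb (X : seq L) (k : {ffun 'I_(size X) -> 'F_p}) : L :=
  \sum_j k j *: X`_j.

Lemma comb0 X : comb X 0 = 0.
Proof. rewrite /comb big1 // => j _; by rewrite ffunE scale0r. Qed.

Lemma combP (X : seq L) v : v \in <<X>>%VS -> exists k, v = comb X k.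
Proof.
rewrite -{1}[X]in_tupleE => /coord_span ->.
exists [ffun j => coord (in_tuple X) j v]; rewrite /comb.
by apply: eq_bigr => j _; rewrite ffunE.
Qed.

Lemma card_nz (X : seq L) : prime p ->
  #|[set~ (0 : {ffun 'I_(size X) -> 'F_p})]| = (p ^ size X - 1)%N.
Proof. move=> pp; by rewrite cardsC1 card_ffun card_Fp // card_ord subn1. Qed.

End Fin.
Arguments comb {p L} X k.
Arguments combP {p L X v}.
Arguments card_nz {p L} X.
Arguments cardL {p L}.
Arguments fermatL {p L} x.
Lemma num_ineq (p d1 d2 n : nat) : (1 < p)%N -> (1 <= n)%N -> (d1 + d2 <= n)%N ->
  ((p ^ d1 - 1) * (p ^ d2 - 1) < p ^ n - 1)%N.
Proof.
move=> p1 n1 dn.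
have hA : (1 <= p ^ d1)%N by rewrite expn_gt0; lia.
have hB : (1 <= p ^ d2)%N by rewrite expn_gt0; lia.
have hP : (p ^ d1 * p ^ d2 <= p ^ n)%N by rewrite -expnD leq_pexp2l //; lia.
have hP2 : (p <= p ^ n)%N by rewrite -{1}(expn1 p) leq_pexp2l //; lia.
move: hA hB hP hP2; move: (p ^ d1)%N (p ^ d2)%N (p ^ n)%N => A B P.
nia.
Qed.

Section Good.
Variables (p : nat) (L : fieldExtType 'F_p).
Let L' := finvect_type L.

Lemma exists_good (X1 X2 : seq L) n : prime p -> \dim {:L} = n -> (1 <= n)%N ->
  (size X1 + size X2 <= n)%N ->
  exists c : L, c != 0 /\
    forall v2, v2 \in <<X2>>%VS -> c * v2 \in <<X1>>%VS -> v2 = 0.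
Proof.
move=> pp dL n1 hs.
pose D := setX [set~ (0 : {ffun 'I_(size X1) -> 'F_p})]
               [set~ (0 : {ffun 'I_(size X2) -> 'F_p})].
pose Bd : {set L'} := [set (comb X1 k.1 / comb X2 k.2 : L') | k in D].
have cB : (#|Bd| < #|[set~ (0%R : L')]|)%N.
  apply: (leq_ltn_trans (leq_imset_card _ _)).
  rewrite cardsX !card_nz // cardsC1 cardL // dL -subn1.
  apply: num_ineq => //; exact: prime_gt1.
have : ~~ ([set~ (0%R : L')] \subset Bd).
  apply/negP => /subset_leq_card; rewrite leqNgt cB //.
case/subsetPn => c; rewrite !inE => cnz cB'.
exists c; split => // v2 v2X cv1X.
apply/eqP; apply: contraNT cB' => v2nz.
have [k1 e1] := combP cv1X.
have [k2 e2] := combP v2X.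
apply/imsetP; exists (k1, k2).
  rewrite !inE /=; apply/andP; split.
    apply: contraNneq (mulf_neq0 cnz v2nz) => k0; by rewrite e1 k0 comb0.
  apply: contraNneq v2nz => k0; by rewrite e2 k0 comb0.
by rewrite /= -e1 -e2 mulfK.
Qed.
End Good.
Lemma ordD_inj n (a : nat) : injective (fun i : 'I_n => ordD i a).
Proof.
move=> i j /(congr1 val) /= /eqP; rewrite eqn_modDr !modn_small // => /eqP.
exact: val_inj.
Qed.

Lemma torT_inj s t (a : 'I_s) (b : 'I_t) : injective (torT a b).
Proof.
move=> [x1 x2] [y1 y2] e.
have e1 : ordD x1 a = ordD y1 a by exact: (congr1 fst e).
have e2 : ordD x2 b = ordD y2 b by exact: (congr1 snd e).
by rewrite (ordD_inj _ _ _ _ e1) (ordD_inj _ _ _ _ e2).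
Qed.

Lemma chin_eq k s t : (t * ((k %% s) * (egcdn t s).1) + s * ((k %% t) * (egcdn s t).1)
   = chinese s t (k%%s) (k%%t))%N.
Proof. rewrite /chinese. nia. Qed.

Theorem mainTheorem3 (p n : nat) (L : fieldExtType 'F_p)
  (s t : nat) (alpha : L) (S1 S2 : {set 'I_s * 'I_t}) :
  prime p -> (1 <= n)%N -> \dim {: L} = n ->
  (p ^ n - 1)%N = (s * t)%N -> (0 < s)%N -> (s < t)%N -> coprime s t ->
  mult_generator alpha ->
  [disjoint S1 & S2] ->
  lin_indep_pattern (alpha ^+ t) (alpha ^+ s) S1 ->
  lin_indep_pattern (alpha ^+ t) (alpha ^+ s) S2 ->
  (\dim <<Aseq (alpha ^+ t) (alpha ^+ s) S1>> +
   \dim <<Aseq (alpha ^+ t) (alpha ^+ s) S2>> <= n)%N ->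
  exists (a : 'I_s) (b : 'I_t),
    [disjoint S1 & torTset a b S2] /\
    lin_indep_pattern (alpha ^+ t) (alpha ^+ s) (S1 :|: torTset a b S2).
Proof.
move=> pp n1 dL hst s0 st cop [anz gen] dis fr1 fr2 hdim.
have t0 : (0 < t)%N by lia.
have aN : alpha ^+ (s * t) = 1 by rewrite -hst -dL fermatL.
have bs : (alpha ^+ t) ^+ s = 1 by rewrite -exprM mulnC.
have gt : (alpha ^+ s) ^+ t = 1 by rewrite -exprM.
set X1 := Aseq (alpha ^+ t) (alpha ^+ s) S1.
set X2 := Aseq (alpha ^+ t) (alpha ^+ s) S2.
have sz1 : size X1 = \dim <<X1>> by apply/esym/eqP; exact: fr1.
have sz2 : size X2 = \dim <<X2>> by apply/esym/eqP; exact: fr2.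
have hs : (size X1 + size X2 <= n)%N by rewrite sz1 sz2.
have [c [cnz cgood]] := @exists_good _ _ X1 X2 n pp dL n1 hs.
have [k ck] := gen c cnz.
pose a : 'I_s := Ordinal (ltn_pmod ((k %% s) * (egcdn t s).1) s0).
pose b : 'I_t := Ordinal (ltn_pmod ((k %% t) * (egcdn s t).1) t0).
have cab : (alpha ^+ t) ^+ a * (alpha ^+ s) ^+ b = c.
  rewrite /= !expr_mod // -!exprM -exprD chin_eq ck.
  by rewrite -(expr_mod _ aN) -[in RHS](expr_mod _ aN) -(chinese_mod cop).
pose g (x : 'I_s * 'I_t) := (alpha ^+ t) ^+ x.1 * (alpha ^+ s) ^+ x.2.
have gtor : forall x, g (torT a b x) = c * g x.
  move=> [x1 x2]; rewrite /g /torT /= !expr_mod // -cab !exprD; ring.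
have gnz : forall x, g x != 0.
  by move=> x; rewrite mulf_neq0 // expf_neq0 // expf_neq0.
have inX1 : forall x, x \in S1 -> g x \in X1.
  by move=> x xS; apply: (map_f g); rewrite mem_enum.
have inX2 : forall x, x \in S2 -> g x \in X2.
  by move=> x xS; apply: (map_f g); rewrite mem_enum.
have notin : forall x, x \in S2 -> torT a b x \notin S1.
  move=> x xS; apply/negP => yS.
  have := cgood (g x) (memv_span (inX2 x xS)).
  rewrite -gtor => /(_ (memv_span (inX1 _ yS))) /eqP; by rewrite (negbTE (gnz x)).
have disj : [disjoint S1 & torTset a b S2].
  rewrite disjoint_sym; apply/pred0P => y /=; apply/negbTE/negP => /andP [/imsetP [x xS ->]].
  by apply/negP; apply: notin.
exists a, b; split => //.
rewrite /lin_indep_pattern /Aseq.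
have pe : perm_eq (enum (S1 :|: torTset a b S2)) (enum S1 ++ map (torT a b) (enum S2)).
  apply: uniq_perm; first exact: enum_uniq.
    rewrite cat_uniq enum_uniq map_inj_uniq ?enum_uniq ?andbT //=; last exact: torT_inj.
    apply/hasPn => y /mapP [x xS ->]; rewrite mem_enum; apply: notin; by rewrite -mem_enum.
  move=> y; rewrite mem_enum mem_cat mem_enum in_setU; congr (_ || _).
  apply/imsetP/mapP => [[x xS ->]|[x xS ->]]; exists x => //; by rewrite ?mem_enum // -mem_enum.
rewrite (perm_free (perm_map _ pe)) map_cat -map_comp.
have -> : map ((fun x : 'I_s * 'I_t => (alpha ^+ t) ^+ x.1 * (alpha ^+ s) ^+ x.2) \o torT a b) (enum S2)
   = map (amull c) X2.
  rewrite /X2 /Aseq -map_comp; apply: eq_map => x /=; rewrite lfunE /=; exact: gtor.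
rewrite cat_free -limg_span.
have ker : lker (amull c) == 0%VS by apply: lker0_amull; rewrite unitfE.
apply/and3P; split => //.
  rewrite /free -limg_span limg_dim_eq ?size_map //.
    by rewrite -sz2 /X2 /Aseq size_map.
  by rewrite (eqP ker) capv0.
apply/directv_addP; apply/vspaceP => v; rewrite memv0; apply/idP/eqP => [|->]; last exact: mem0v.
move=> /memv_capP [v1 /memv_imgP [w wX2 ew]].
rewrite ew lfunE /=; rewrite ew lfunE /= in v1.
by rewrite (cgood w wX2 v1) mulr0.
Qed.
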